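(* Consider the disclosure model described in the context (emission space $E=[0,\bar e]$, type space $\Theta=[\underline\theta,\bar\theta]$, profit function $\tilde\pi$ satisfying the standing assumptions, and $\pi(\theta,e)=\tilde\pi(\theta,e,e)$). An emission scheme $\mathbf{e}:\Theta\to E$ is implementable if and only if \[\pi(\theta,\mathbf{e}(\theta))\ge \pi(\theta,\mathbf{e}(\theta'))\quad\text{for all }\theta,\theta'\in\Theta,\] and \[\pi(\theta,\mathbf{e}(\theta))\ge \pi(\theta,\bar e)\quad\text{for all }\theta\in\Theta.\]
   Context: Emissions lie in $E=[0,\bar e]\subset\mathbb{R}_+$ with $\bar e>0$. The firm's type $\theta$ lies in $\Theta=[\underline\theta,\bar\theta]\subset\mathbb{R}$ and has a density $f=F'$ that is continuous on $\Theta$. The firm's profit is $\tilde\pi(\theta,e,\tilde e)$, where $e$ is the actual emission and $\tilde e\in E$ the emission perceived by the market. For each $\theta$, $\tilde\pi$ is strictly increasing in $e$ and strictly decreasing in $\tilde e$. Standing assumptions: $\tilde\pi$ is continuous on $\Theta\times E\times E$ and twice continuously differentiable on its interior; $\pi(\theta,e):=\tilde\pi(\theta,e,e)$ is strictly concave in $e$ on $E$ for each $\theta$; and $\pi(\theta,0)<\pi(\theta,\bar e)$ for all $\theta$. A disclosure policy is a function $d:E\to E$; it represents the partition of $E$ into the level sets of $d$, and the market observes $d(e)$. An emission level $e\in E$ is belief-compatible under $d$ if $e\ge e'$ for every $e'\in E$ with $d(e')=d(e)$. Let $\tilde E_d$ denote the set of belief-compatible emission levels. In equilibrium, the market believes that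 the firm chose the highest emission consistent with what is disclosed, so the firm of type $\theta$ effectively solves $\max_{e\in\tilde E_d}\pi(\theta,e)$. Let $\mathcal{D}$ denote the set of disclosure policies $d$ for which this maximum is attained for every $\theta\in\Theta$. An emission scheme $\mathbf{e}:\Theta\to E$ is implementable if there exists $d\in\mathcal{D}$ such that for every $\theta\in\Theta$, $\mathbf{e}(\theta)$ is belief-compatible under $d$ and maximizes $\pi(\theta,\cdot)$ over $\tilde E_d$. *)

(* Defs.v *)
From Stdlib Require Import Reals.
Open Scope R_scope.

Definition inE (ebar e : R) : Prop := 0 <= e <= ebar.
Definition inTheta (thl thh th : R) : Prop := thl <= th <= thh.

Definition cont3_on (U : R -> R -> R -> Prop) (g : R -> R -> R -> R) : Prop :=
  forall x y z, U x y z -> forall eps, 0 < eps -> exists delta, 0 < delta /\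
    forall x' y' z', U x' y' z' ->
      Rabs (x' - x) < delta -> Rabs (y' - y) < delta -> Rabs (z' - z) < delta ->
      Rabs (g x' y' z' - g x y z) < eps.

Definition partials3_on (U : R -> R -> R -> Prop) (g g1 g2 g3 : R -> R -> R -> R) : Prop :=
  forall x y z, U x y z ->
    derivable_pt_lim (fun t => g t y z) x (g1 x y z) /\
    derivable_pt_lim (fun t => g x t z) y (g2 x y z) /\
    derivable_pt_lim (fun t => g x y t) z (g3 x y z).

Definition C1_on (U : R -> R -> R -> Prop) (g : R -> R -> R -> R) : Prop :=
  exists g1 g2 g3, partials3_on U g g1 g2 g3 /\
    cont3_on U g1 /\ cont3_on U g2 /\ cont3_on U g3.

Definition C2_on (U : R -> R -> R -> Prop) (g : R -> R -> R -> R) : Prop :=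
  cont3_on U g /\
  exists g1 g2 g3, partials3_on U g g1 g2 g3 /\ C1_on U g1 /\ C1_on U g2 /\ C1_on U g3.

Definition strictly_concave_on (a b : R) (h : R -> R) : Prop :=
  forall x y t, a <= x <= b -> a <= y <= b -> x <> y -> 0 < t < 1 ->
    t * h x + (1 - t) * h y < h (t * x + (1 - t) * y).

Definition derivative_within (a b : R) (F f : R -> R) : Prop :=
  forall x, a <= x <= b -> forall eps, 0 < eps -> exists delta, 0 < delta /\
    forall h, h <> 0 -> a <= x + h <= b -> Rabs h < delta ->
      Rabs ((F (x + h) - F x) / h - f x) < eps.

Definition continuous_within (a b : R) (f : R -> R) : Prop :=
  forall x, a <= x <= b -> forall eps, 0 < eps -> exists delta, 0 < delta /\
    forall y, a <= y <= b -> Rabs (y - x) < delta -> Rabs (f y - f x) < eps.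

Definition standing_assumptions (ebar thl thh : R) (pit : R -> R -> R -> R) : Prop :=
  (* strictly increasing in actual emission e *)
  (forall th et e1 e2, inTheta thl thh th -> inE ebar et -> inE ebar e1 -> inE ebar e2 ->
     e1 < e2 -> pit th e1 et < pit th e2 et) /\
  (* strictly decreasing in perceived emission e~ *)
  (forall th e et1 et2, inTheta thl thh th -> inE ebar e -> inE ebar et1 -> inE ebar et2 ->
     et1 < et2 -> pit th e et2 < pit th e et1) /\
  cont3_on (fun th e et => inTheta thl thh th /\ inE ebar e /\ inE ebar et) pit /\
  C2_on (fun th e et => thl < th < thh /\ 0 < e < ebar /\ 0 < et < ebar) pit /\
  (forall th, inTheta thl thh th -> strictly_concave_on 0 ebar (fun e => pit th e e)) /\
  (forall th, inTheta thl thh th -> pit th 0 0 < pit th ebar ebar).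

Definition pi_ (pit : R -> R -> R -> R) (th e : R) : R := pit th e e.

Definition disclosure_policy (ebar : R) (d : R -> R) : Prop :=
  forall e, inE ebar e -> inE ebar (d e).

Definition belief_compatible (ebar : R) (d : R -> R) (e : R) : Prop :=
  inE ebar e /\ forall e', inE ebar e' -> d e' = d e -> e' <= e.

Definition maximizes_over_bc (ebar : R) (pit : R -> R -> R -> R) (d : R -> R) (th e : R) : Prop :=
  belief_compatible ebar d e /\
  forall e', belief_compatible ebar d e' -> pi_ pit th e' <= pi_ pit th e.

Definition in_D (ebar thl thh : R) (pit : R -> R -> R -> R) (d : R -> R) : Prop :=
  disclosure_policy ebar d /\
  forall th, inTheta thl thh th -> exists e, maximizes_over_bc ebar pit d th e.

Definition implementable (ebar thl thh : R) (pit : R -> R -> R -> R) (ee : R -> R) : Prop :=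
  exists d, in_D ebar thl thh pit d /\
    forall th, inTheta thl thh th -> maximizes_over_bc ebar pit d th (ee th).

(* Main.v *)
Require Import Defs.
From Stdlib Require Import Reals Lra ClassicalEpsilon.
Open Scope R_scope.

Theorem lemma1 (ebar thl thh : R) (F f : R -> R) (pit : R -> R -> R -> R) (ee : R -> R)
  (Hebar : 0 < ebar) (Hth : thl < thh)
  (HF : derivative_within thl thh F f) (Hf : continuous_within thl thh f)
  (Hpit : standing_assumptions ebar thl thh pit)
  (Hee : forall th, inTheta thl thh th -> inE ebar (ee th)) :
  implementable ebar thl thh pit ee <->
  ((forall th th', inTheta thl thh th -> inTheta thl thh th' ->
      pi_ pit th (ee th') <= pi_ pit th (ee th)) /\
   (forall th, inTheta thl thh th -> pi_ pit th ebar <= pi_ pit th (ee th))).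
Proof.
  split.
  - intros [d [[Hd HD] Hm]]. split.
    + intros th th' Ht Ht'. apply (proj2 (Hm th Ht)). apply (proj1 (Hm th' Ht')).
    + intros th Ht. apply (proj2 (Hm th Ht)). split.
      * unfold inE; lra.
      * intros e' [_ He'] _; exact He'.
  - intros [H1 H2].
    set (P := fun e => exists th, inTheta thl thh th /\ ee th = e).
    set (d := fun e => if excluded_middle_informative (P e) then e else ebar).
    assert (Hdin : forall e, P e -> d e = e).
    { intros e He; unfold d; destruct (excluded_middle_informative (P e)); tauto. }
    assert (Hdout : forall e, ~ P e -> d e = ebar).
    { intros e He; unfold d; destruct (excluded_middle_informative (P e)); tauto. }
    assert (HdE : forall e, d e = e \/ d e = ebar).
    { intros e; unfold d; destruct (excluded_middle_informative (P e)); auto. }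
    assert (Hbc_e : forall th, inTheta thl thh th -> belief_compatible ebar d (ee th)).
    { intros th Ht. split; [apply Hee; auto|].
      intros e' He' Hd. assert (Pe : P (ee th)) by (exists th; auto).
      rewrite (Hdin _ Pe) in Hd.
      destruct (HdE e') as [Q|Q]; rewrite Q in Hd; [lra|].
      destruct He'; lra. }
    assert (Hbc_char : forall e', belief_compatible ebar d e' -> P e' \/ e' = ebar).
    { intros e' [He' Hc]. destruct (excluded_middle_informative (P e')) as [p|np]; auto.
      right. assert (Hb : d ebar = d e' -> ebar <= e').
      { apply Hc. unfold inE; lra. }
      rewrite (Hdout _ np) in Hb.
      destruct (HdE ebar) as [Q|Q]; rewrite Q in Hb; destruct He'; specialize (Hb eq_refl); lra. }
    assert (Hmax : forall th, inTheta thl thh th -> maximizes_over_bc ebar pit d th (ee th)).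
    { intros th Ht. split; [auto|]. intros e' He'.
      destruct (Hbc_char e' He') as [[th' [Ht' Q]]|Q]; subst e'; auto. }
    exists d. split; [split|exact Hmax].
    + intros e He. destruct (HdE e) as [Q|Q]; rewrite Q; auto. unfold inE; lra.
    + intros th Ht. exists (ee th). auto.
Qed.
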